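(* Let $t,\Delta,\omega\ge 2$ be integers and write $\Delta=a(\omega-1)+b$ with integers $a\ge0$ and $0\le b<\omega-1$. Then \[ f_t(\Delta,\omega)\ \le\ \frac1t\,k_{t-1}\big(T(\Delta,\omega-1)\big)=\frac1t\sum_{k=0}^{b}\binom{b}{k}\binom{\omega-1-b}{t-1-k}(a+1)^k a^{t-1-k} \] (with the convention $0^0=1$).
   Context: $\mathcal{G}(\Delta,\omega)$ denotes the class of finite simple graphs $G$ with maximum degree $\Delta(G)\le\Delta$ and clique number $\omega(G)\le\omega$. $k_t(G)$ is the number of copies of $K_t$ in $G$ and $\rho_t(G)=k_t(G)/|V(G)|$. $f_t(\Delta,\omega)=\sup\{\rho_t(G): G\in\mathcal{G}(\Delta,\omega),\ |V(G)|\ge 1\}$. $T(n,r)$ denotes the $r$-partite Turán graph on $n$ vertices: the complete $r$-partite graph on $n$ vertices whose part sizes are all $\lfloor n/r\rfloor$ or $\lceil n/r\rceil$ (when $n<r$ this is $K_n$). *)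

(* Defs.v *)
From HB Require Import structures.
From mathcomp Require Import all_boot all_order all_algebra.
Set Implicit Arguments. Unset Strict Implicit. Unset Printing Implicit Defensive.

Definition simple_graph (V : finType) (e : rel V) : Prop :=
  symmetric e /\ irreflexive e.

Definition is_clique (V : finType) (e : rel V) (S : {set V}) : bool :=
  [forall x in S, forall y in S, (x != y) ==> e x y].

Definition degree (V : finType) (e : rel V) (x : V) : nat := #|[set y | e x y]|.

Definition maxdeg_le (V : finType) (e : rel V) (D : nat) : Prop :=
  forall x : V, degree e x <= D.

Definition clique_num_le (V : finType) (e : rel V) (w : nat) : Prop :=
  forall S : {set V}, is_clique e S -> #|S| <= w.

Definition kcount (V : finType) (e : rel V) (t : nat) : nat :=
  #|[set S : {set V} | (#|S| == t) && is_clique e S]|.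

Definition rho (V : finType) (e : rel V) (t : nat) : rat :=
  ((kcount e t)%:R / #|V|%:R)%R.

(* Turan graph T(n,r): vertex set 'I_n, parts = residue classes mod r
   (r parts of sizes floor(n/r) or ceil(n/r)); complete r-partite. *)
Definition turan_rel (n r : nat) : rel 'I_n :=
  fun i j => (i %% r) != (j %% r).
Arguments turan_rel : clear implicits.

(* Main.v *)
Require Import Defs.
From HB Require Import structures.
From mathcomp Require Import all_boot all_order all_algebra.
From mathcomp Require Import zify.
Set Implicit Arguments. Unset Strict Implicit. Unset Printing Implicit Defensive.

Fixpoint es (l : seq nat) (s : nat) : nat :=
  match l with
  | [::] => (s == 0)
  | x :: l' => match s with 0 => 1 | s'.+1 => es l' s'.+1 + x * es l' s' end
  end.

Lemma es0 l : es l 0 = 1. Proof. by case: l. Qed.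

Lemma es_swap x y l s : es [:: x, y & l] s = es [:: y, x & l] s.
Proof. case: s => [|[|s]] //=; rewrite ?es0; lia. Qed.

Lemma es_cons_eq x l l' : (forall s, es l s = es l' s) -> forall s, es (x :: l) s = es (x :: l') s.
Proof. by move=> H [|s] //=; rewrite !H. Qed.

Lemma es_mid l1 x l2 s : es (l1 ++ x :: l2) s = es (x :: l1 ++ l2) s.
Proof.
elim: l1 s => [|y l1 IH] s //.
rewrite [RHS]es_swap cat_cons; apply: es_cons_eq => {}s; exact: IH.
Qed.

Lemma es_perm l l' s : perm_eq l l' -> es l s = es l' s.
Proof.
elim: l l' s => [|x l IH] l' s.
  by move=> /perm_size; case: l'.
move=> Hp.
have Hx : x \in l' by rewrite -(perm_mem Hp) mem_head.
move: Hp; case/splitPr: Hx => l1 l2 Hp.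
rewrite es_mid.
have Hp' : perm_eq l (l1 ++ l2).
  rewrite -(perm_cons x); apply: (perm_trans Hp).
  have := perm_catCA l1 [:: x] l2; rewrite /= => H; by rewrite H.
by apply: es_cons_eq => {}s; apply: IH.
Qed.

Lemma es_move x d l s : es [:: x, (x + d).+1 & l] s <= es [:: x.+1, x + d & l] s.
Proof.
case: s => [|[|s]] //=; rewrite ?es0.
  set A := es l 1; lia.
set A := es l s.+2; set B := es l s.+1; set C := es l s. nia.
Qed.

Lemma es_head_mono x d l s : es (x :: l) s <= es ((x + d) :: l) s.
Proof. case: s => [|s] //=; nia. Qed.

Definition C (N R : nat) : seq nat := nseq (N %% R) (N %/ R).+1 ++ nseq (R - N %% R) (N %/ R).

Lemma C_props N R : 0 < R -> size (C N R) = R /\ sumn (C N R) = N.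
Proof.
move=> HR; rewrite /C size_cat !size_nseq sumn_cat !sumn_nseq.
have := ltn_pmod N HR; have := divn_eq N R; nia.
Qed.

Definition Phi (l : seq nat) := sumn [seq x * x | x <- l].

Lemma perm_Phi l l' : perm_eq l l' -> Phi l = Phi l'.
Proof. by move=> H; apply: perm_sumn; apply: perm_map. Qed.

Lemma Bal_term l lo R N : (forall y, y \in l -> lo <= y <= lo.+1) ->
  size l = R -> sumn l = N -> 0 < R -> perm_eq l (C N R).
Proof.
move=> Hy Hsz Hsum HR.
rewrite -(perm_filterC (pred1 lo.+1)).
set l1 := filter _ l; set l2 := filter _ l.
have E1 : l1 = nseq (size l1) lo.+1 by apply/all_pred1P; rewrite /l1 filter_all.
have E2 : l2 = nseq (size l2) lo.
  apply/all_pred1P; apply/allP => y; rewrite /l2 mem_filter /= => /andP [Hne Hl].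
  have := Hy y Hl; move: Hne; lia.
have Hk : size l1 + size l2 = R by rewrite /l1 /l2 !size_filter count_predC.
have HN : N = size l1 * lo.+1 + size l2 * lo.
  have PP : perm_eq (l1 ++ l2) l by rewrite /l1 /l2 perm_filterC.
  rewrite -Hsum -(perm_sumn PP) sumn_cat.
  by rewrite {1}E1 {1}E2 !sumn_nseq; lia.
rewrite E1 E2 /C.
case: (posnP (size l2)) => Hj.
- have Hl1 : size l1 = R by lia.
  have HN1 : N = lo.+1 * R by lia.
  rewrite HN1 modnMl mulnK // Hj Hl1 subn0 cats0 /=.
  done.
- have Hlt : size l1 < R by lia.
  have HN' : N = lo * R + size l1 by lia.
  have -> : N %% R = size l1 by rewrite HN' modnMDl modn_small.
  have -> : N %/ R = lo by rewrite HN' divnMDl // divn_small // addn0.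
  by have -> : R - size l1 = size l2 by lia.
Qed.

Lemma Bal_aux n l R N s : Phi l < n -> size l = R -> sumn l = N -> es l s <= es (C N R) s.
Proof.
elim: n l R N s => [|n IH] l R N s //.
move=> Hn Hsz Hsum.
case Hp: (has (fun x => has (fun y => x.+1 < y) l) l).
- case/hasP: Hp => x Hx /hasP [y Hy Hxy].
  have Hyx : y != x by apply/negP => /eqP E; move: Hxy; rewrite E; lia.
  have P1 := perm_to_rem Hx.
  have Hy' : y \in rem x l.
    by move: Hy; rewrite (perm_mem P1) in_cons (negbTE Hyx).
  have P2 : perm_eq l [:: x, y & rem y (rem x l)].
    apply: (perm_trans P1); rewrite perm_cons; exact: perm_to_rem.
  set rest := rem y (rem x l) in P2.
  have Ey : y = (x + (y - x - 1)).+1 by lia.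
  rewrite (es_perm s P2) Ey.
  apply: leq_trans (es_move _ _ _ _) _.
  apply: IH.
  + move: Hn Hxy; rewrite (perm_Phi P2) /Phi /=.
    have -> : x + (y - x - 1) = y.-1 by lia.
    nia.
  + by rewrite -Hsz (perm_size P2).
  + rewrite -Hsum (perm_sumn P2) /=; lia.
- case: (altP (l =P [::])) => [E|Hne].
    by move: Hsz Hsum; rewrite E /= => <- <-; rewrite /C /=.
  have exl : exists k, k \in l by case: l Hne {Hp Hn Hsz Hsum} => // x l _; exists x; rewrite mem_head.
  case: (ex_minnP exl) => lo Hlo Hmin.
  have HR : 0 < R by rewrite -Hsz; case: l Hne {Hp Hn Hsz Hsum Hlo Hmin exl}.
  suff HP : perm_eq l (C N R) by rewrite (@es_perm _ _ s HP).
  apply: (@Bal_term l lo R N _ Hsz Hsum HR).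
  move=> y Hy; rewrite Hmin //=.
  case: (leqP y lo.+1) => // Hlt.
  by move/negP: Hp; case; apply/hasP; exists lo => //; apply/hasP; exists y.
Qed.

Lemma Bal l R N s : size l = R -> sumn l = N -> es l s <= es (C N R) s.
Proof. exact: (@Bal_aux (Phi l).+1). Qed.

Lemma BalLe l R N s : 0 < R -> size l = R -> sumn l <= N -> es l s <= es (C N R) s.
Proof.
case: l => [|x l] HR Hsz Hsum; first by move: HR; rewrite -Hsz.
apply: leq_trans (es_head_mono x (N - sumn (x :: l)) l s) _.
apply: Bal => //=; move: Hsum => /=; lia.
Qed.

Section Graph.
Variable V : finType.
Variable e : rel V.

Definition kset (U : {set V}) s := [set S : {set V} | [&& S \subset U, #|S| == s & is_clique e S]].
Definition kc U s := #|kset U s|.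
Definition cnb (U : {set V}) r := forall S : {set V}, S \subset U -> is_clique e S -> #|S| <= r.

Lemma cliqueP (S : {set V}) : reflect (forall x y, x \in S -> y \in S -> x != y -> e x y) (is_clique e S).
Proof.
apply: (iffP forallP) => H.
- move=> x y Hx Hy Hxy; have := H x; rewrite Hx /= => /forallP /(_ y); rewrite Hy /= Hxy; by [].
- move=> x; apply/implyP => Hx; apply/forallP => y; apply/implyP => Hy; apply/implyP; exact: H.
Qed.

Lemma clique_sub (S T : {set V}) : S \subset T -> is_clique e T -> is_clique e S.
Proof. move=> /subsetP HS /cliqueP H; apply/cliqueP => x y Hx Hy; apply: H; exact: HS. Qed.

Lemma clique_add (v : V) (S : {set V}) : symmetric e -> is_clique e S -> (forall y, y \in S -> e v y) ->
  is_clique e (v |: S).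
Proof.
move=> Hsym /cliqueP H Hv; apply/cliqueP => x y; rewrite !inE.
case/orP=> [/eqP->|Hx]; case/orP=> [/eqP->|Hy]; rewrite ?eqxx //.
- by move=> _; apply: Hv.
- by move=> _; rewrite Hsym; apply: Hv.
- exact: H.
Qed.

Lemma card_ind (S P : {set V}) : #|S :&: P| = \sum_(x in P) (x \in S : nat).
Proof.
rewrite -sum1_card big_mkcond [RHS]big_mkcond; apply: eq_bigr => x _ /=.
by rewrite inE; case: (x \in S); case: (x \in P).
Qed.

Lemma DC (A : {set {set V}}) (P : {set V}) :
  \sum_(S in A) #|S :&: P| = \sum_(x in P) #|[set S in A | x \in S]|.
Proof.
under eq_bigr => S _ do rewrite card_ind.
rewrite exchange_big /=; apply: eq_bigr => x _.
rewrite -sum1_card big_mkcond [RHS]big_mkcond; apply: eq_bigr => S _ /=.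
by rewrite inE; case: (x \in S); case: (S \in A).
Qed.


Lemma kc0 (U : {set V}) : kc U 0 = 1.
Proof.
rewrite /kc (_ : kset U 0 = [set set0]) ?cards1 //.
apply/setP => S; rewrite !inE cards_eq0.
case: eqP => [->|_]; last by rewrite andbF.
apply/andP; split; first by apply/subsetP => x; rewrite inE.
by apply/cliqueP => x y; rewrite inE.
Qed.

Lemma kc_big (U : {set V}) r s : cnb U r -> r < s -> kc U s = 0.
Proof.
move=> H Hrs; apply/eqP; rewrite cards_eq0; apply/eqP/setP => S; rewrite !inE.
apply/negP => /and3P [H1 /eqP H2 H3]; have := H S H1 H3; lia.
Qed.

Lemma ext (U : {set V}) s v : v \in U ->
  #|[set S in kset U s.+1 | v \in S]| <= kc (U :&: [set y | e v y]) s.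
Proof.
move=> Hv; set A := [set S in kset U s.+1 | v \in S].
have Hinj : {in A &, injective (fun S => S :\ v)}.
  move=> S1 S2; rewrite !inE => /andP [_ H1] /andP [_ H2] E.
  by rewrite -(setD1K H1) -(setD1K H2) E.
rewrite -(card_in_imset Hinj); apply: subset_leq_card; apply/subsetP => T /imsetP [S HS ->].
move: HS; rewrite !inE => /andP [/and3P [HSU /eqP HSc HScl] HvS].
apply/and3P; split.
- apply/subsetP => y; rewrite !inE => /andP [Hyv HyS].
  rewrite (subsetP HSU _ HyS) /=.
  by move/cliqueP: HScl; apply => //; rewrite eq_sym.
- by move: HSc; rewrite (cardsD1 v) HvS add1n => -[->].
- by apply: clique_sub HScl; apply: subD1set.
Qed.

Lemma cnb_nbr (U : {set V}) r v : symmetric e -> irreflexive e -> cnb U r.+1 -> v \in U ->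
  cnb (U :&: [set y | e v y]) r.
Proof.
move=> Hsym Hirr H Hv S HS Hcl.
have HvS : v \notin S.
  apply/negP => /(subsetP HS); rewrite !inE => /andP [_]; by rewrite Hirr.
have := H (v |: S).
rewrite cardsU1 HvS /= add1n ltnS; apply.
- rewrite subUset sub1set Hv /=; apply: subset_trans HS _; exact: subsetIl.
- apply: clique_add => // y /(subsetP HS); rewrite !inE => /andP [_ //].
Qed.


Lemma clique1 (x : V) : is_clique e [set x].
Proof. by apply/cliqueP => y z; rewrite !inE => /eqP -> /eqP ->; rewrite eqxx. Qed.

Lemma cnb0 (U : {set V}) : cnb U 0 -> U = set0.
Proof.
move=> H; apply/setP => x; rewrite inE; apply/negP => Hx.
by have := H [set x]; rewrite sub1set Hx cards1 => /(_ isT (clique1 x)).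
Qed.

Lemma key (U : {set V}) s v : v \in U ->
  (forall u, u \in U -> #|[set S in kset U s.+1 | u \in S]| <= #|[set S in kset U s.+1 | v \in S]|) ->
  kc U s.+1 <= kc (U :&: [set y | e v y]) s.+1 +
     #|U :\: (U :&: [set y | e v y])| * #|[set S in kset U s.+1 | v \in S]|.
Proof.
move=> Hv Hmax.
set N' := U :&: [set y | e v y]; set I := U :\: N'.
set A := kset U s.+1; set B := [set S : {set V} | S \subset N'].
rewrite /kc -/A -(cardsID B A); apply: leq_add.
  apply: subset_leq_card; apply/subsetP => S; rewrite !inE => /andP [/and3P [_ H2 H3] H4].
  by rewrite H2 H3 H4.
apply: (@leq_trans (\sum_(S in A :\: B) #|S :&: I|)).
  rewrite -sum1_card; apply: leq_sum => S; rewrite !inE => /andP [HSB /and3P [HSU _ _]].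
  rewrite card_gt0; case/subsetPn: HSB => x HxS HxN.
  apply/set0Pn; exists x; rewrite !inE HxS /=.
  by move: HxN; rewrite !inE (subsetP HSU _ HxS) /= => ->.
rewrite DC -sum_nat_const; apply: leq_sum => x Hx.
apply: leq_trans (Hmax x _); last by move: Hx; rewrite !inE => /andP [].
apply: subset_leq_card; apply/subsetP => S; rewrite !inE.
by case/andP => /andP [_ ->] ->.
Qed.

Lemma Z r : symmetric e -> irreflexive e -> forall (U : {set V}) s, cnb U r -> kc U s <= es (C #|U| r) s.
Proof.
move=> Hsym Hirr; elim: r => [|r IH] U s Hcnb.
  case: s => [|s]; first by rewrite kc0 es0.
  by rewrite (kc_big Hcnb).
case: s => [|s]; first by rewrite kc0 es0.
case: (set_0Vmem U) => [HU|[v0 Hv0]].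
  rewrite (@kc_big _ 0) // => S HS _.
  by rewrite -(cards0 V); apply: subset_leq_card; rewrite -HU.
set g := fun u => #|[set S in kset U s.+1 | u \in S]|.
have HUp : 0 < #|U| by apply/card_gt0P; exists v0.
have [v Hv Hmax] := @eq_bigmax_cond V (mem U) g HUp.
have Hm : forall u, u \in U -> g u <= g v.
  by move=> u Hu; rewrite -Hmax; apply: (@leq_bigmax_cond V (mem U) g u).
have K := key Hv Hm.
set N' := U :&: [set y | e v y] in K.
have HN' : cnb N' r by apply: cnb_nbr.
apply: (leq_trans K).
apply: (@leq_trans (es (#|U :\: N'| :: C #|N'| r) s.+1)).
  rewrite /=; apply: leq_add; first exact: IH.
  apply: leq_mul => //; apply: leq_trans (ext s Hv) _; exact: IH.
have Hcard : #|U :\: N'| + #|N'| = #|U|.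
  by rewrite addnC -(cardsID N' U) /N' setIA setIid.
apply: Bal => /=.
  case: (posnP r) => [Hr|Hr]; last by case: (C_props #|N'| Hr) => ->.
  by rewrite /C Hr (cnb0 (_ : cnb N' 0)) ?cards0 //; rewrite -Hr.
rewrite -Hcard; congr (_ + _).
case: (posnP r) => [Hr|Hr]; last by case: (C_props #|N'| Hr) => _ ->.
by move: HN'; rewrite Hr => /cnb0 ->; rewrite cards0 /C.
Qed.


Lemma join (U P : {set V}) s : symmetric e -> P \subset U ->
  (forall x y, x \in P -> y \in P -> ~~ e x y) ->
  (forall x y, x \in P -> y \in U :\: P -> e x y) ->
  kc U s.+1 = kc (U :\: P) s.+1 + #|P| * kc (U :\: P) s.
Proof.
move=> Hsym HPU Hind Hjn.
set A := kset U s.+1; set B := [set S : {set V} | S \subset U :\: P].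
rewrite /kc -/A -(cardsID B A); congr (_ + _).
  apply: eq_card => S; rewrite !inE; apply/idP/idP.
    by case/andP => /and3P [_ -> ->] ->.
  case/and3P => H1 -> ->; rewrite H1 andbT /=.
  by rewrite andbT; exact: subset_trans H1 (subsetDl _ _).
have E1 : forall S, S \in A :\: B -> #|S :&: P| = 1.
  move=> S; rewrite !inE => /andP [HSB /and3P [HSU _ Hcl]].
  case/subsetPn: HSB => x HxS HxN.
  have HxP : x \in P by move: HxN; rewrite !inE (subsetP HSU _ HxS) andbT negbK.
  rewrite (_ : S :&: P = [set x]) ?cards1 //; apply/setP => y; rewrite !inE.
  apply/andP/eqP => [[HyS HyP]|->]; last by [].
  apply/eqP; apply/negP => /negP Hne; move/cliqueP: Hcl => /(_ y x HyS HxS Hne).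
  by move: (Hind y x HyP HxP) => /negbTE ->.
rewrite -sum1_card (eq_bigr _ (fun S HS => esym (E1 S HS))) DC -sum_nat_const.
apply: eq_bigr => x HxP.
have HxU : x \in U by apply: (subsetP HPU).
have Hinj : {in kset (U :\: P) s &, injective (fun T => x |: T)}.
  move=> T1 T2; rewrite !inE => /and3P [H1 _ _] /and3P [H2 _ _] E.
  have N1 : x \notin T1 by apply/negP => /(subsetP H1); rewrite !inE HxP.
  have N2 : x \notin T2 by apply/negP => /(subsetP H2); rewrite !inE HxP.
  by rewrite -(setU1K N1) -(setU1K N2) E.
rewrite -(card_in_imset Hinj); apply: eq_card => S; rewrite inE; apply/idP/imsetP.
- rewrite !inE => /andP [/andP [HSB /and3P [HSU /eqP HSc Hcl]] HxS].
  exists (S :\ x); last by rewrite setD1K.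
  rewrite !inE; apply/and3P; split.
  + apply/subsetP => y; rewrite !inE => /andP [Hyx HyS].
    rewrite (subsetP HSU _ HyS) andbT; apply/negP => HyP.
    move/cliqueP: Hcl => /(_ y x HyS HxS Hyx).
    by move: (Hind y x HyP HxP) => /negbTE ->.
  + by move: HSc; rewrite (cardsD1 x) HxS add1n => -[->].
  + by apply: clique_sub Hcl; apply: subD1set.
- case=> T; rewrite !inE => /and3P [HT /eqP HTc Hcl] ->.
  have NT : x \notin T by apply/negP => /(subsetP HT); rewrite !inE HxP.
  rewrite setU11 andbT cardsU1 NT HTc eqxx /=.
  apply/and3P; split.
  + by apply/negP => /subsetP /(_ x (setU11 _ _)); rewrite !inE HxP.
  + by rewrite subUset sub1set HxU (subset_trans HT (subsetDl _ _)).
  + apply: clique_add => // y HyT; apply: Hjn => //; exact: (subsetP HT).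
Qed.

End Graph.

Lemma kcountE (V : finType) (e : rel V) t : kcount e t = kc e setT t.
Proof. by apply: eq_card => S; rewrite !inE subsetT. Qed.

Lemma cls r n q m j : 0 < r -> n = q * r + m -> m < r -> j < r ->
  \sum_(i < n) (i %% r == j : nat) = q + (j < m).
Proof.
move=> Hr; elim: n q m => [|n IH] q m.
  move=> H0 Hm Hj; rewrite big_ord0.
  have -> : q = 0 by nia.
  have -> : m = 0 by nia.
  by rewrite ltn0.
move=> Hn Hm Hj; rewrite big_ord_recr /=.
case: m Hn Hm => [|m] Hn Hm.
- have Hq : 0 < q by nia.
  rewrite (IH q.-1 r.-1); [|nia|lia|lia].
  have -> : n %% r = r.-1.
    have -> : n = q.-1 * r + r.-1 by nia.
    by rewrite modnMDl modn_small //; lia.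
  rewrite ltn0 addn0.
  case: (ltnP j r.-1) => H1.
    have -> : (r.-1 == j) = false by apply/negbTE/eqP; lia.
    rewrite addn0 addn1; lia.
  have -> : r.-1 == j by apply/eqP; lia.
  rewrite addn0 addn1; lia.
- rewrite (IH q m); [|nia|lia|lia].
  have -> : n %% r = m.
    have -> : n = q * r + m by nia.
    by rewrite modnMDl modn_small //; lia.
  case: (ltngtP j m) => H1.
  + have -> : j < m.+1 by lia.
    by rewrite /= addn0.
  + have -> : (j < m.+1) = false by apply/negbTE; rewrite -leqNgt.
    by rewrite /= !addn0.
  + by rewrite H1 ltnSn /= addn0.
Qed.

Section Turan.
Variables D r : nat.
Hypothesis Hr : 0 < r.

Definition Uj j : {set 'I_D} := [set x : 'I_D | x %% r < j].
Definition Pj j : {set 'I_D} := [set x : 'I_D | x %% r == j].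
Fixpoint pl j := match j with 0 => [::] | j'.+1 => #|Pj j'| :: pl j' end.

Lemma tur_sym : symmetric (turan_rel D r).
Proof. by move=> x y; rewrite /turan_rel eq_sym. Qed.

Lemma kc_Uj j s : kc (turan_rel D r) (Uj j) s = es (pl j) s.
Proof.
elim: j s => [|j IH] s.
  have U0 : Uj 0 = set0 by apply/setP => x; rewrite !inE ltn0.
  case: s => [|s]; first by rewrite kc0.
  rewrite (@kc_big _ _ _ 0) // U0 => S HS _.
  by rewrite -(cards0 'I_D); apply: subset_leq_card.
case: s => [|s]; first by rewrite kc0 es0.
have E : Uj j.+1 :\: Pj j = Uj j.
  apply/setP => x; rewrite !inE ltnS leq_eqVlt.
  by case: (ltngtP (x %% r) j).
rewrite (@join _ _ _ (Pj j)) ?E ?IH //.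
- exact: tur_sym.
- by apply/subsetP => x; rewrite !inE => /eqP ->.
- by move=> x y; rewrite !inE /turan_rel => /eqP -> /eqP ->; rewrite eqxx.
- by move=> x y; rewrite !inE /turan_rel => /eqP -> Hy; rewrite neq_ltn Hy orbT.
Qed.

Lemma Ur : Uj r = setT.
Proof. by apply/setP => x; rewrite !inE ltn_pmod. Qed.

Lemma cardPj a b j : D = a * r + b -> b < r -> j < r -> #|Pj j| = a + (j < b).
Proof.
move=> HD Hb Hj; rewrite -(cls Hr HD Hb Hj) -sum1_card big_mkcond.
by apply: eq_bigr => i _; rewrite inE.
Qed.

Lemma pl_eq a b j : D = a * r + b -> b < r -> j <= r ->
  pl j = if j <= b then nseq j a.+1 else nseq (j - b) a ++ nseq b a.+1.
Proof.
move=> HD Hb; elim: j => [|j IH] Hj //=.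
rewrite IH; last by lia.
rewrite (cardPj HD Hb) //.
case: (ltnP j b) => Hjb.
  by rewrite (_ : j <= b) ?addn1 //; lia.
rewrite addn0.
case: (leqP j b) => Hjb'.
  have -> : j = b by lia.
  by rewrite subSnn.
by rewrite subSn.
Qed.

End Turan.

Lemma es_nil s : es [::] s = (s == 0). Proof. by []. Qed.

Lemma es_cat l1 l2 s : es (l1 ++ l2) s = \sum_(k < s.+1) es l1 k * es l2 (s - k).
Proof.
elim: l1 s => [|x l1 IH] s.
  by rewrite big_ord_recl /= mul1n subn0 big1 ?addn0.
case: s => [|s]; first by rewrite big_ord1 /= !es0.
rewrite cat_cons /= !IH.
rewrite [in RHS]big_ord_recl /= mul1n subn0.
rewrite [X in X + _ = _]big_ord_recl /= es0 mul1n subn0 -addnA; congr (_ + _).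
rewrite big_distrr -big_split /=; apply: eq_bigr => i _.
rewrite /bump /= add1n subSS mulnDl mulnA //.
Qed.

Lemma es_nseq m x k : es (nseq m x) k = 'C(m, k) * x ^ k.
Proof.
elim: m k => [|m IH] [|k] //=.
by rewrite IH IH binS expnS mulnDl; congr (_ + _); rewrite mulnCA mulnA.
Qed.

Lemma turan_count D r a b s : 0 < r -> D = a * r + b -> b < r ->
  kcount (turan_rel D r) s = es (nseq b a.+1 ++ nseq (r - b) a) s.
Proof.
move=> Hr HD Hb.
rewrite kcountE -(Ur D Hr) kc_Uj (pl_eq Hr HD Hb (leqnn r)).
rewrite (_ : r <= b = false); last by apply/negbTE; rewrite -ltnNge.
by apply: es_perm; rewrite perm_catC.
Qed.

Lemma C_eq D r a b : 0 < r -> D = a * r + b -> b < r -> C D r = nseq b a.+1 ++ nseq (r - b) a.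
Proof.
move=> Hr HD Hb; rewrite /C.
have -> : D %% r = b by rewrite HD modnMDl modn_small.
by have -> : D %/ r = a by rewrite HD divnMDl // divn_small // addn0.
Qed.

Lemma closed_form a b c s : es (nseq b a.+1 ++ nseq c a) s =
  \sum_(k < b.+1 | k <= s) 'C(b, k) * 'C(c, s - k) * (a + 1) ^ k * a ^ (s - k).
Proof.
rewrite es_cat.
rewrite (@big_ord_widen _ _ _ s.+1 (b + s).+1 (fun k => es (nseq b a.+1) k * es (nseq c a) (s - k))); last by lia.
rewrite (@big_ord_widen_cond _ _ _ b.+1 (b + s).+1 (fun k => k <= s) (fun k => 'C(b, k) * 'C(c, s - k) * (a + 1) ^ k * a ^ (s - k))); last by lia.
rewrite big_mkcond [RHS]big_mkcond /=; apply: eq_bigr => k _ /=.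
rewrite !es_nseq addn1 !ltnS.
case: (leqP k s) => Hks; last by [].
case: (leqP k b) => Hkb; last by rewrite bin_small.
by rewrite -!mulnA (mulnCA (a.+1 ^ k)).
Qed.

Unset Implicit Arguments.
Import Order.TTheory GRing.Theory Num.Theory.

Theorem mainTheorem4 (t D w a b : nat) :
  2 <= t -> 2 <= D -> 2 <= w ->
  D = a * (w - 1) + b -> b < w - 1 ->
  (forall (V : finType) (e : rel V),
      simple_graph e -> 0 < #|V| -> maxdeg_le e D -> clique_num_le e w ->
      (rho e t <= (kcount (turan_rel D (w - 1)%N) (t - 1)%N)%:R / t%:R)%R)
  /\
  kcount (turan_rel D (w - 1)) (t - 1) =
    \sum_(k < b.+1 | k <= t - 1)
       'C(b, k) * 'C(w - 1 - b, t - 1 - k) * (a + 1) ^ k * a ^ (t - 1 - k).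
Proof.
move=> Ht HD Hw HDab Hb.
have Hr : 0 < w - 1 by lia.
have HT : forall s, kcount (turan_rel D (w - 1)) s = es (C D (w - 1)) s.
  by move=> s; rewrite (turan_count s Hr HDab Hb) (C_eq Hr HDab Hb).
split; last by rewrite HT (C_eq Hr HDab Hb) closed_form.
move=> V e [Hsym Hirr] Hn Hdeg Hcl.
have Hts : t = (t - 1).+1 by lia.
have Hnat : kcount e t * t <= #|V| * kcount (turan_rel D (w - 1)) (t - 1).
  rewrite HT kcountE.
  move: (t - 1) Hts => s Hts; rewrite Hts.
  set A := kset e setT s.+1.
  have E1 : #|A| * s.+1 = \sum_(S in A) #|S :&: setT|.
    rewrite -sum_nat_const; apply: eq_bigr => S; rewrite !inE setIT.
    by case/and3P => _ /eqP -> _.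
  rewrite /kc -/A E1 DC -cardsT -sum_nat_const; apply: leq_sum => x _.
  apply: leq_trans (@ext V e setT s x (in_setT x)) _.
  have Hw' : cnb e setT (w - 1).+1.
    move=> S _ Hc; rewrite (_ : (w - 1).+1 = w); [exact: Hcl | lia].
  have HN := @cnb_nbr V e setT (w - 1) x Hsym Hirr Hw' (in_setT x).
  apply: leq_trans (@Z V e (w - 1) Hsym Hirr _ s HN) _.
  case: (C_props #|setT :&: [set y | e x y]| Hr) => Hsz Hsum.
  apply: BalLe Hr Hsz _; rewrite Hsum setTI; exact: Hdeg.
have Ht0 : (0 < t%:R :> rat)%R by rewrite ltr0n; lia.
have Hn0 : (0 < #|V|%:R :> rat)%R by rewrite ltr0n.
rewrite /rho ler_pdivrMr // mulrAC ler_pdivlMr //.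
rewrite -!natrM ler_nat [_ * #|V|]mulnC; exact: Hnat.
Qed.
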